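(* Let $\mathcal{M}=(E_t,\mathcal{T})$ be a simple oriented matroid, $a\in E_t$, and $k$ an integer with $1\le k\le|\mathcal{T}|/2$. Put $h=\lfloor(|\mathcal{T}|-k+1)/2\rfloor$, $B=\binom{|\mathcal{T}|-k}{h}$, $\mathcal{P}_a=\bigcup_{e\in E_t-\{a\}}\binom{\mathcal{T}^+_e(\mathcal{M})}{h}$, $\mathcal{N}^+=\binom{\mathcal{T}^+_a(\mathcal{M})}{h}-\mathcal{P}_a$, $\mathcal{N}^-=\binom{\mathcal{T}^-_a(\mathcal{M})}{h}-\mathcal{P}_a$. For families $\mathcal{G}$ of tope sets write $U_{\mathcal{G}}=\bigcup_{G\in\mathcal{G}}G$ (with $U_\emptyset=\emptyset$). Define \[ S_1(Q)=\sum_{\substack{\mathcal{G}''\subseteq\mathcal{P}_a:\ 0\le\#\mathcal{G}''\le B-1,\\ |U_{\mathcal{G}''}|\le|\mathcal{T}|-k}}(-1)^{\#\mathcal{G}''}\Biggl(\sum_{\substack{\mathcal{G}'\subseteq\mathcal{N}^-:\ 1\le\#\mathcal{G}'\le B-\#\mathcal{G}'',\\ |U_{\mathcal{G}'}|\le|\mathcal{T}|-k}}(-1)^{\#\mathcal{G}'}Q(\mathcal{G}',\mathcal{G}'')-\sum_{\substack{\mathcal{G}'\subseteq\mathcal{N}^+:\ 1\le\#\mathcal{G}'\le B-\#\mathcal{G}'',\\ |U_{\mathcal{G}'}|\le|\mathcal{T}|-k}}(-1)^{\#\mathcal{G}'}Q(\mathcal{G}',\mathcal{G}'')\Biggr)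 \] and \[ S_2(\mathfrak{Q})=\sum_{\substack{G''\in\boldsymbol{\mathcal{E}}(\mathcal{P}_a):\\ 0\le|G''|\le|\mathcal{T}|-k}}\mu(\hat0,G'')\Biggl(\sum_{\substack{G'\in\boldsymbol{\mathcal{E}}(\mathcal{N}^-):\\ 0<|G'|\le|\mathcal{T}|-k}}\mu(\hat0,G')\,\mathfrak{Q}(G',G'')-\sum_{\substack{G'\in\boldsymbol{\mathcal{E}}(\mathcal{N}^+):\\ 0<|G'|\le|\mathcal{T}|-k}}\mu(\hat0,G')\,\mathfrak{Q}(G',G'')\Biggr), \] where each $\mu$ is the Möbius function of the lattice in which its arguments lie, and $G''=\hat0$ is interpreted as $\emptyset$. (i) With $Q(\mathcal{G}',\mathcal{G}'')=\binom{|\mathcal{T}|-|U_{\mathcal{G}'\cup\mathcal{G}''}|}{k}$ and $\mathfrak{Q}(G',G'')=\binom{|\mathcal{T}|-|G'\cup G''|}{k}$, both $S_1(Q)$ and $S_2(\mathfrak{Q})$ equal $\kappa^{\ast}_k({}_{-a}\mathcal{M})-\kappa^{\ast}_k(\mathcal{M})$. (ii) With $Q(\mathcal{G}',\mathcal{G}'')=\sum_{j=0}^{k}\binom{|U\cup-U|-|U|}{j}\binom{\frac12(|\mathcal{T}|-|U\cup-U|)}{k-j}2^{k-j}$ where $U=U_{\mathcal{G}'\cup\mathcal{G}''}$, and $\mathfrak{Q}(G',G'')$ given by the same expression with $U=G'\cup G''$, both $S_1(Q)$ and $S_2(\mathfrak{Q})$ equal $\mathring{\kappa}^{\ast}_k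({}_{-a}\mathcal{M})-\mathring{\kappa}^{\ast}_k(\mathcal{M})$.
   Context: Let $t\ge 1$ and $E_t=\{1,\dots,t\}$. $\mathcal{M}=(E_t,\mathcal{T})$ is a simple oriented matroid (no loops, parallel or antiparallel elements) with set of topes $\mathcal{T}\subseteq\{+,-\}^{E_t}$, closed under negation. For $e\in E_t$, $\mathcal{T}^+_e(\mathcal{M})=\{T\in\mathcal{T}: T(e)=+\}$ and $\mathcal{T}^-_e(\mathcal{M})=\{T\in\mathcal{T}: T(e)=-\}$. For $G\subseteq\mathcal{T}$, $-G=\{-T:T\in G\}$. $\binom{X}{j}$ denotes the family of $j$-element subsets of $X$; numerical binomial coefficients $\binom{n}{j}$ are $0$ when $j>n$ or $j<0$. For $a\in E_t$, ${}_{-a}\mathcal{M}$ is the reorientation of $\mathcal{M}$ on $\{a\}$: the oriented matroid on $E_t$ whose topes are the sign vectors obtained from the topes of $\mathcal{M}$ by negating the $a$-th component. For a family $\mathcal{G}$ of subsets of $\mathcal{T}$, $\boldsymbol{\mathcal{E}}(\mathcal{G})$ is the lattice of all unions $\bigcup_{F\in\mathcal{F}}F$ over nonempty subfamilies $\mathcal{F}\subseteq\mathcal{G}$, ordered by inclusion, with a new least element $\hat0$ adjoined and interpreted as the empty set ($|\hat0|=0$). A tope committee for an oriented matroid on $E_t$ with tope set $\mathcal{T}'$ is a subset $\mathcal{K}^{\ast}\subset\mathcal{T}'$ with $|\{T\in\mathcal{K}^{\ast}: T(e)=+\}|>\tfrac12|\mathcal{K}^{\ast}|$ for every $e\in E_t$;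 $\kappa^{\ast}_k(\cdot)$ counts tope committees of cardinality $k$, and $\mathring{\kappa}^{\ast}_k(\cdot)$ counts those containing no pair of opposite topes $\{T,-T\}$. *)

(* Defs.v *)
From HB Require Import structures.
From mathcomp Require Import all_boot all_order all_algebra.
Set Implicit Arguments. Unset Strict Implicit. Unset Printing Implicit Defensive.
Import Order.TTheory GRing.Theory Num.Theory.

(* Covectors: sign vectors in {-,0,+}^{E_t}; None = 0, Some true = +, Some false = -.
   E_t = {1,...,t} is represented by 'I_t. *)
Definition covec (t : nat) := {ffun 'I_t -> option bool}.
(* Topes: sign vectors in {+,-}^{E_t}; true = +, false = -. *)
Definition tvec (t : nat) := {ffun 'I_t -> bool}.

Definition cneg t (X : covec t) : covec t := [ffun e => omap negb (X e)].
Definition ccomp t (X Y : covec t) : covec t :=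
  [ffun e => if X e is Some b then Some b else Y e].
Definition csep t (X Y : covec t) (f : 'I_t) : bool :=
  (X f != None) && (X f == omap negb (Y f)).

(* Covector axioms of an oriented matroid (Bjorner et al., Def. 4.1.1). *)
Definition is_OM t (L : {set covec t}) : Prop :=
  [/\ [ffun _ => None] \in L,
      (forall X, X \in L -> cneg X \in L),
      (forall X Y, X \in L -> Y \in L -> ccomp X Y \in L) &
      (forall X Y e, X \in L -> Y \in L -> csep X Y e ->
         exists2 Z, Z \in L &
           Z e = None /\ (forall f, ~~ csep X Y f -> Z f = ccomp X Y f))].

Definition is_loop t (L : {set covec t}) (e : 'I_t) : Prop :=
  forall X, X \in L -> X e = None.
Definition parallel t (L : {set covec t}) (e f : 'I_t) : Prop :=
  forall X, X \in L -> X e = X f.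
Definition antiparallel t (L : {set covec t}) (e f : 'I_t) : Prop :=
  forall X, X \in L -> X e = omap negb (X f).
Definition simple_OM t (L : {set covec t}) : Prop :=
  (forall e, ~ is_loop L e) /\
  (forall e f, e != f -> ~ parallel L e f /\ ~ antiparallel L e f).

(* Topes = maximal covectors; for a loopless OM these are exactly the
   covectors of full support, identified with sign vectors in {+,-}^{E_t}. *)
Definition topes t (L : {set covec t}) : {set tvec t} :=
  [set T : tvec t | [ffun e => Some (T e)] \in L].

Definition tneg t (T : tvec t) : tvec t := [ffun e => ~~ T e].
Definition flip_at t (a : 'I_t) (T : tvec t) : tvec t :=
  [ffun e => if e == a then ~~ T e else T e].
Definition reorient_topes t (a : 'I_t) (Tp : {set tvec t}) : {set tvec t} :=
  [set flip_at a T | T in Tp].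

Definition Tplus t (Tp : {set tvec t}) (e : 'I_t) : {set tvec t} :=
  [set T in Tp | T e].
Definition Tminus t (Tp : {set tvec t}) (e : 'I_t) : {set tvec t} :=
  [set T in Tp | ~~ T e].

Definition is_committee t (Tp K : {set tvec t}) : bool :=
  (K \subset Tp) && [forall e : 'I_t, #|K| < 2 * #|[set T in K | T e]| ].
Definition kappa t (k : nat) (Tp : {set tvec t}) : nat :=
  #|[set K : {set tvec t} | is_committee Tp K && (#|K| == k)]|.
Definition kappa_ring t (k : nat) (Tp : {set tvec t}) : nat :=
  #|[set K : {set tvec t} | [&& is_committee Tp K, #|K| == k &
        [forall T, (T \in K) ==> (tneg T \notin K)]]]|.

Definition subsets_of t (X : {set tvec t}) (h : nat) : {set {set tvec t}} :=
  [set G : {set tvec t} | (G \subset X) && (#|G| == h)].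
Definition Pfam t (Tp : {set tvec t}) (a : 'I_t) (h : nat) :=
  \bigcup_(e : 'I_t | e != a) subsets_of (Tplus Tp e) h.
Definition Nplus t (Tp : {set tvec t}) (a : 'I_t) (h : nat) :=
  subsets_of (Tplus Tp a) h :\: Pfam Tp a h.
Definition Nminus t (Tp : {set tvec t}) (a : 'I_t) (h : nat) :=
  subsets_of (Tminus Tp a) h :\: Pfam Tp a h.

Definition Ufam t (F : {set {set tvec t}}) : {set tvec t} :=
  \bigcup_(G in F) G.

(* mu(x,x) = 1, mu(x,y) = - sum_{x <= z < y} mu(x,z) for x < y, 0 otherwise.
   Defined by recursion with fuel #|P|+1, which exceeds every chain length. *)
Fixpoint mob_rec (T : finType) (P : {set T}) (le : rel T) (n : nat) (x y : T)
    : int :=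
  match n with
  | 0 => 0%R
  | n'.+1 =>
      if x == y then 1%R
      else if le x y then
        (- \sum_(z in P | [&& le x z, le z y & z != y]) mob_rec P le n' x z)%R
      else 0%R
  end.
Definition mobius (T : finType) (P : {set T}) (le : rel T) (x y : T) : int :=
  mob_rec P le #|P|.+1 x y.

(* Elements: None = the adjoined least element 0^, Some A = the union A of a
   nonempty subfamily of G. Ordered by inclusion, 0^ below everything. *)
Definition Elat t (G : {set {set tvec t}}) : {set option {set tvec t}} :=
  None |: [set Some (Ufam F) | F in [set F : {set {set tvec t}} |
                                      (F \subset G) && (F != set0)]].
Definition Ele t : rel (option {set tvec t}) :=
  fun x y => match x, y with
             | None, _ => true
             | Some _, None => false
             | Some A, Some B => A \subset B
             end.
Definition oset t (x : option {set tvec t}) : {set tvec t} :=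
  if x is Some A then A else set0.
Definition osize t (x : option {set tvec t}) : nat := #|oset x|.

Definition hpar t (Tp : {set tvec t}) (k : nat) : nat := (#|Tp| - k + 1) %/ 2.
Definition Bpar t (Tp : {set tvec t}) (k : nat) : nat :=
  'C(#|Tp| - k, hpar Tp k).

Local Open Scope ring_scope.

Definition S1 t (Tp : {set tvec t}) (a : 'I_t) (k : nat)
    (Q : {set {set tvec t}} -> {set {set tvec t}} -> int) : int :=
  let n := #|Tp| in let h := hpar Tp k in let B := Bpar Tp k in
  let Pa := Pfam Tp a h in
  \sum_(G2 : {set {set tvec t}} |
          [&& G2 \subset Pa, (#|G2| < B)%N & (#|Ufam G2| <= n - k)%N])
    (-1) ^+ #|G2| *
    ( \sum_(G1 : {set {set tvec t}} |
          [&& G1 \subset Nminus Tp a h, (1 <= #|G1|)%N,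
              (#|G1| + #|G2| <= B)%N & (#|Ufam G1| <= n - k)%N])
        (-1) ^+ #|G1| * Q G1 G2
    - \sum_(G1 : {set {set tvec t}} |
          [&& G1 \subset Nplus Tp a h, (1 <= #|G1|)%N,
              (#|G1| + #|G2| <= B)%N & (#|Ufam G1| <= n - k)%N])
        (-1) ^+ #|G1| * Q G1 G2 ).

Definition S2 t (Tp : {set tvec t}) (a : 'I_t) (k : nat)
    (Q : {set tvec t} -> {set tvec t} -> int) : int :=
  let n := #|Tp| in let h := hpar Tp k in
  let EP := Elat (Pfam Tp a h) in
  let EM := Elat (Nminus Tp a h) in
  let EN := Elat (Nplus Tp a h) in
  \sum_(y2 in EP | (osize y2 <= n - k)%N)
    mobius EP (@Ele t) None y2 *
    ( \sum_(y1 in EM | (0 < osize y1 <= n - k)%N)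
        mobius EM (@Ele t) None y1 * Q (oset y1) (oset y2)
    - \sum_(y1 in EN | (0 < osize y1 <= n - k)%N)
        mobius EN (@Ele t) None y1 * Q (oset y1) (oset y2) ).

Definition Qbin t (Tp : {set tvec t}) (k : nat) (U : {set tvec t}) : int :=
  ('C(#|Tp| - #|U|, k))%:Z.
Definition Qring t (Tp : {set tvec t}) (k : nat) (U : {set tvec t}) : int :=
  let UU := U :|: [set tneg T | T in U] in
  (\sum_(0 <= j < k.+1)
     'C(#|UU| - #|U|, j) * 'C((#|Tp| - #|UU|) %/ 2, k - j) * 2 ^ (k - j))%N%:Z.

(* Main.v *)
Require Import Defs.
From HB Require Import structures.
From mathcomp Require Import all_boot all_order all_algebra.
From Stdlib Require Import Lia.
Import Order.TTheory GRing.Theory Num.Theory.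
Set Implicit Arguments. Unset Strict Implicit. Unset Printing Implicit Defensive.

Section Count.
Variable t : nat.
Hypothesis tneg_neq : forall x : tvec t, tneg x != x.
Implicit Types (Z W A K : {set tvec t}) (x : tvec t).

Lemma tnegK : involutive (@tneg t).
Proof. by move=> T; apply/ffunP => e; rewrite !ffunE negbK. Qed.

Definition af K := [forall T, (T \in K) ==> (tneg T \notin K)].

Definition cc Z m (P : pred {set tvec t}) :=
  #|[set K : {set tvec t} | [&& K \subset Z, #|K| == m & P K]]|.

Lemma cc_ext Z m (P P' : pred {set tvec t}) :
  (forall K, K \subset Z -> P K = P' K) -> cc Z m P = cc Z m P'.
Proof.
move=> H; apply: eq_card => K; rewrite !inE.
by case KZ: (K \subset Z) => //=; rewrite H.
Qed.

Lemma cc_restr Z m (P : pred {set tvec t}) y :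
  cc Z m (fun K => P K && (y \notin K)) = cc (Z :\ y) m P.
Proof.
apply: eq_card => K; rewrite !inE subsetD1.
by case: (K \subset Z); case: (y \in K); rewrite /= ?andbF ?andbT.
Qed.

Lemma cc0 Z (P : pred {set tvec t}) : cc Z 0 P = P set0.
Proof.
rewrite /cc; case P0: (P set0).
  apply/eqP/cards1P; exists set0; apply/setP => K; rewrite !inE cards_eq0.
  by case: eqP => [->|]; rewrite ?sub0set ?P0 ?andbF.
apply/eqP; rewrite cards_eq0; apply/eqP/setP => K; rewrite !inE cards_eq0.
by case: eqP => [->|]; rewrite ?P0 ?andbF.
Qed.

Lemma cc_split Z m (P : pred {set tvec t}) x : x \in Z ->
  cc Z m.+1 P = (cc (Z :\ x) m.+1 P + cc (Z :\ x) m (fun K => P (x |: K)))%N.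
Proof.
move=> xZ; rewrite /cc.
set S := [set K : {set tvec t} | _].
rewrite -(cardsID [set K : {set tvec t} | x \in K] S) addnC; congr (_ + _)%N.
  apply: eq_card => K; rewrite !inE subsetD1.
  by case: (K \subset Z); case: (x \in K); rewrite /= ?andbF.
pose S' := [set K : {set tvec t} | [&& K \subset Z :\ x, #|K| == m & P (x |: K)]].
have -> : S :&: [set K : {set tvec t} | x \in K] = (fun K => x |: K) @: S'.
  apply/setP => K; rewrite !inE; apply/idP/imsetP => [|[K' K'S ->]].
    case/andP=> /and3P[KZ /eqP cK PK] xK; exists (K :\ x); last by rewrite setD1K.
    rewrite inE setSD // setD1K // PK andbT.
    by move: cK; rewrite (cardsD1 x) xK /= add1n => -[->].
  move: K'S; rewrite inE subsetD1 => /and3P[/andP[K'Z xK'] /eqP cK' PK'].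
  rewrite setU11 andbT subUset sub1set xZ K'Z cardsU1 xK' cK' add1n eqxx.
  exact: PK'.
rewrite card_in_imset // => K1 K2; rewrite !inE !subsetD1 => /and3P[/andP[_ x1] _ _] /and3P[/andP[_ x2] _ _] E.
by rewrite -(setU1K x1) -(setU1K x2) E.
Qed.

Lemma afU1 x K : x \notin K -> af (x |: K) = af K && (tneg x \notin K).
Proof.
move=> xK; apply/forallP/andP => [H|[/forallP HK nx] T].
  split.
    apply/forallP => T; apply/implyP => TK.
    have := implyP (H T) (setU1r _ TK); rewrite in_setU1 negb_or => /andP[].
    by [].
  have := implyP (H x) (setU11 _ _); rewrite in_setU1 negb_or => /andP[].
  by [].
apply/implyP; rewrite !in_setU1 => /orP[/eqP ->|TK].
  by rewrite negb_or tneg_neq.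
rewrite negb_or (implyP (HK T) TK) andbT; apply/eqP => E; move/negP: nx; apply.
by rewrite -E tnegK.
Qed.

Lemma af0 : af set0.
Proof. by apply/forallP => T; rewrite in_set0. Qed.

Lemma cc_set0 m : cc set0 m.+1 af = 0%N.
Proof.
apply: eq_card0 => K; rewrite !inE subset0; apply/negP => /and3P[/eqP -> ].
by rewrite cards0.
Qed.

Definition tclosed W := forall x, x \in W -> tneg x \in W.

Lemma ccW p : forall W, tclosed W -> (#|W| <= p * 2)%N ->
  forall m, cc W m af = ('C(#|W| %/ 2, m) * 2 ^ m)%N.
Proof.
elim: p => [|p IH] W cW.
  rewrite leqn0 => /eqP/cards0_eq -> [|m]; first by rewrite cc0 af0 bin0 expn0.
  by rewrite cc_set0 cards0 div0n bin0n.
case: (set_0Vmem W) => [-> _ [|m]|[x xW] le]; first by rewrite cc0 af0 bin0 expn0.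
  by rewrite cc_set0 cards0 div0n bin0n.
pose y := tneg x.
have yW : y \in W by exact: cW.
have yx : y != x by exact: tneg_neq.
have yWx : y \in W :\ x by rewrite in_setD1 yx.
pose W' := W :\ x :\ y.
have cardW : #|W| = (#|W'|.+2)%N.
  by rewrite (cardsD1 x W) xW (cardsD1 y (W :\ x)) yWx.
have cW' : tclosed W'.
  move=> z; rewrite !in_setD1 => /and3P[zy zx zW]; rewrite cW // andbT.
  apply/andP; split; apply/eqP => E.
    by move/eqP: zx; apply; rewrite -(tnegK z) E /y tnegK.
  by move/eqP: zy; apply; rewrite /y -E tnegK.
have le' : (#|W'| <= p * 2)%N by move: le; rewrite cardW mulSn add2n ltnS ltnS.
case=> [|m]; first by rewrite cc0 af0 bin0 expn0.
rewrite (cc_split _ _ xW) (cc_split _ _ yWx).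
have E1 : cc W' m (fun K => af (y |: K)) = cc W' m af.
  apply: cc_ext => K KW; rewrite afU1 ?tnegK.
    suff -> : x \notin K by rewrite andbT.
    by apply/negP => /(subsetP KW); rewrite !in_setD1 eqxx andbF.
  by apply/negP => /(subsetP KW); rewrite !in_setD1 eqxx.
have E2 : cc (W :\ x) m (fun K => af (x |: K)) = cc W' m af.
  rewrite -(cc_restr (W :\ x) m af y); apply: cc_ext => K KW; rewrite afU1 //.
  by apply/negP => /(subsetP KW); rewrite !in_setD1 eqxx.
rewrite E1 E2 !IH // cardW !divn2 /= binS expnS.
set u := 'C(_, m); set v := 'C(_, m.+1); set w := 2 ^ m.
rewrite -!multE -!plusE; lia.
Qed.

Lemma ccA W n : forall A, #|A| = n -> [disjoint A & W] ->
  (forall x, x \in A -> tneg x \notin A :|: W) ->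
  forall m, cc (A :|: W) m af = (\sum_(0 <= j < m.+1) 'C(#|A|, j) * cc W (m - j) af)%N.
Proof.
elim: n => [|n IH] A cA dAW nA m.
  move/cards0_eq: cA => ->; rewrite set0U big_nat_recl // cards0 bin0 mul1n subn0.
  by rewrite big1 ?addn0 // => j _; rewrite bin0n.
have : (0 < #|A|)%N by rewrite cA.
rewrite card_gt0 => /set0Pn[x xA].
pose A' := A :\ x.
have cA' : #|A'| = n by move: cA; rewrite (cardsD1 x) xA add1n => -[].
have xW : x \notin W by apply/negP => xW; move: dAW; rewrite -setI_eq0 => /eqP/setP/(_ x); rewrite !inE xA xW.
have dA'W : [disjoint A' & W].
  by apply: disjointWl dAW; apply: subsetDl.
have nA' : forall z, z \in A' -> tneg z \notin A' :|: W.
  move=> z; rewrite in_setD1 => /andP[_ zA]; apply: contra (nA z zA).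
  by rewrite !inE => /orP[/andP[_ ->]|->]; rewrite ?orbT.
have xAW : x \in A :|: W by rewrite inE xA.
have eZ : (A :|: W) :\ x = A' :|: W.
  apply/setP => z; rewrite !inE; case: (eqVneq z x) => [->|] //=.
  by rewrite (negbTE xW).
case: m => [|m].
  by rewrite cc0 af0 big_nat1 bin0 subn0 cc0 af0.
rewrite (cc_split _ _ xAW) eZ.
have E : cc (A' :|: W) m (fun K => af (x |: K)) = cc (A' :|: W) m af.
  apply: cc_ext => K KZ; rewrite afU1.
    suff -> : tneg x \notin K by rewrite andbT.
    by apply: contra (nA x xA) => /(subsetP KZ); rewrite !inE => /orP[/andP[_ ->]|->]; rewrite ?orbT.
  by apply/negP => /(subsetP KZ); rewrite -eZ in_setD1 eqxx.
rewrite E !IH // cA cA'.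
set g := fun i => cc W i af.
have L1 : (\sum_(0 <= j < m.+2) 'C(n, j) * g (m.+1 - j) =
    g m.+1 + \sum_(0 <= j < m.+1) 'C(n, j.+1) * g (m - j))%N.
  by rewrite big_nat_recl // bin0 mul1n subn0; congr (_ + _)%N; apply: eq_bigr => j _; rewrite subSS.
have L2 : (\sum_(0 <= j < m.+2) 'C(n.+1, j) * g (m.+1 - j) =
    g m.+1 + (\sum_(0 <= j < m.+1) 'C(n, j) * g (m - j) +
              \sum_(0 <= j < m.+1) 'C(n, j.+1) * g (m - j)))%N.
  rewrite big_nat_recl // bin0 mul1n subn0; congr (_ + _)%N.
  under eq_bigr => j _ do rewrite binS mulnDl subSS.
  by rewrite big_split /= addnC.
by rewrite L1 L2 -addnA; congr (_ + _)%N; rewrite addnC.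
Qed.
End Count.

Open Scope ring_scope.

Lemma alt_sum (T : finType) (A : {set T}) :
  \sum_(F : {set T} | F \subset A) (-1) ^+ #|F| = (((A == set0) : nat)%:R :> int).
Proof.
have [->|/set0Pn [x xA]] := eqVneq A set0.
  rewrite (big_pred1 set0) ?cards0 ?expr0 // => F; by rewrite subset0.
rewrite (bigID (fun F : {set T} => x \in F)) /=.
rewrite (reindex_onto (fun F => x |: F) (fun F => F :\ x)) /=; last first.
  by move=> F /andP[_ xF]; rewrite setD1K.
pose P2 := (fun F : {set T} => (F \subset A) && (x \notin F)). rewrite [X in X + _](eq_bigl P2) => [|F]; last first.
rewrite /P2.   rewrite subUset sub1set xA setU11 /=.
  case xF: (x \in F); last by rewrite setU1K ?xF ?eqxx ?andbT.
  suff /negbTE -> : (x |: F) :\ x != F by rewrite /= !andbF. apply/eqP => E.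
  by move: xF; rewrite -{1}E setD11.
rewrite -big_split /= big1 // => F /andP[FA xF].
by rewrite cardsU1 xF exprS mulN1r addNr.
Qed.

Lemma card_sumR (T : finType) (S : {set T}) (p : pred T) :
  (#|[set x in S | p x]|%:R : int) = \sum_(x in S) ((p x : nat)%:R).
Proof.
rewrite -sum1_card natr_sum big_mkcond [RHS]big_mkcond /=.
by apply: eq_bigr => x _; rewrite inE; case: (x \in S); case: (p x).
Qed.

Lemma IE (T : finType) (S N : {set {set T}}) :
  \sum_(F : {set {set T}} | F \subset N)
     (-1) ^+ #|F| * (#|[set K in S | [disjoint K & \bigcup_(G in F) G]]|%:R : int)
  = #|[set K in S | [forall G in N, ~~ [disjoint K & G]]]|%:R.
Proof.
under eq_bigr => F _ do rewrite card_sumR big_distrr /=.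
rewrite exchange_big /= card_sumR; apply: eq_bigr => K KS.
pose NK := [set G in N | [disjoint K & G]].
rewrite (eq_bigr (fun F : {set {set T}} => if F \subset NK then (-1)^+#|F| else 0)) => [|F FN]; last first.
  have -> : [disjoint K & \bigcup_(G in F) G] = (F \subset NK).
    apply/bigcup_disjointP/subsetP => [H G GF|H G GF].
      by rewrite inE (subsetP FN _ GF) H.
    by move: (H G GF); rewrite inE => /andP[].
  by case: (F \subset NK); rewrite ?mulr1 ?mulr0.
rewrite -big_mkcondr /= (eq_bigl (fun F : {set {set T}} => F \subset NK)) => [|F]; last first.
  apply/andP/idP => [[]//|FNK]; split=> //.
  by apply: subset_trans FNK _; apply/subsetP => G; rewrite inE => /andP[].
rewrite alt_sum; congr (_ %:R); congr (nat_of_bool _).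
apply/idP/idP => [/eqP E | /forall_inP H].
  apply/forall_inP => G GN; apply/negP => D.
  have : G \in NK by rewrite inE GN D.
  by rewrite E inE.
apply/eqP/setP => G; rewrite !inE; apply/andP => -[/H /negP]. exact.
Qed.

Section Mob.
Variable t : nat.
Implicit Types (G F : {set {set tvec t}}) (y z : option {set tvec t}).

Definition iotaF F : option {set tvec t} := if F == set0 then None else Some (Ufam F).

Lemma oset_iota F : oset (iotaF F) = Ufam F.
Proof. by rewrite /iotaF; case: eqP => [->|]; rewrite //= /Ufam big_set0. Qed.

Lemma iota_in G F : F \subset G -> iotaF F \in Elat G.
Proof.
rewrite /iotaF /Elat; case: eqP => [_|/eqP F0] FG; first by rewrite setU11.
by rewrite setU1r //; apply/imsetP; exists F => //; rewrite inE FG F0.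
Qed.

Lemma Ele_refl y : Ele y y.
Proof. by case: y => //= A; apply: subxx. Qed.

Lemma Ele_trans y z w : Ele y z -> Ele z w -> Ele y w.
Proof. by case: y; case: z; case: w => //= A B C; move=> h1 h2; apply: subset_trans h1 h2. Qed.

Lemma Ele_anti y z : Ele y z -> Ele z y -> y = z.
Proof. by case: y; case: z => //= A B h1 h2; congr Some; apply/eqP; rewrite eqEsubset h1 h2. Qed.

Definition mval G y : int := \sum_(F : {set {set tvec t}} | (F \subset G) && (iotaF F == y)) (-1) ^+ #|F|.

Lemma down_sum G y : y \in Elat G ->
  \sum_(z in Elat G | Ele z y) mval G z = ((y == None) : nat)%:R.
Proof.
move=> yE.
have -> : \sum_(z in Elat G | Ele z y) mval G z =
          \sum_(F : {set {set tvec t}} | (F \subset G) && Ele (iotaF F) y) (-1) ^+ #|F|.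
  rewrite (partition_big iotaF (fun z => (z \in Elat G) && Ele z y)) /=; last first.
    by move=> F /andP[FG Fy]; rewrite iota_in.
  apply: eq_bigr => z /andP[zE zy]; apply: eq_bigl => F.
  by case: (iotaF F =P z) => [->|]; rewrite ?andbT ?andbF // zy andbT.
case: y yE => [A|] yE /=.
  pose GA := [set g in G | g \subset A].
  rewrite (eq_bigl (fun F : {set {set tvec t}} => F \subset GA)) => [|F]; last first.
    rewrite /iotaF; case: eqP => [->|_] /=.
      by rewrite sub0set andbT; apply/esym/subsetP => g; rewrite inE.
    apply/andP/subsetP => [[FG UA] g gF|H].
      by rewrite inE (subsetP FG _ gF) /=; apply: subset_trans UA; apply: bigcup_sup.
    split; first by apply/subsetP => g /H; rewrite inE => /andP[].
    by apply/bigcupsP => g /H; rewrite inE => /andP[].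
  rewrite alt_sum; suff /negbTE -> : GA != set0 by [].
  move: yE; rewrite /Elat in_setU1 /= => /imsetP[F0]; rewrite inE => /andP[F0G /set0Pn[g gF0]] [EA].
  apply/set0Pn; exists g; rewrite inE (subsetP F0G _ gF0) /= EA; exact: bigcup_sup.
rewrite (eq_bigl (pred1 (set0 : {set {set tvec t}}))) => [|F]; last first.
  rewrite /iotaF /=; case: eqP => [->|/eqP F0]; first by rewrite sub0set.
  by rewrite andbF; apply/esym/negbTE.
by rewrite big_pred1_eq cards0 expr0.
Qed.

Lemma mob_rec_eq G n y : y \in Elat G ->
  (#|[set z in Elat G | Ele z y]| <= n)%N -> mob_rec (Elat G) (@Ele t) n None y = mval G y.
Proof.
elim: n y => [|n IH] y yE.
  by rewrite leqn0 => /eqP/cards0_eq/setP/(_ y); rewrite in_set0 in_set yE Ele_refl.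
move=> cy /=.
case: eqP => [<-|yN].
  have := down_sum (iota_in (sub0set G)); rewrite /iotaF eqxx /=.
  rewrite (big_pred1 None) => [-> //|z].
  apply/andP/eqP => [[_]|->]; first by case: z.
  by split; rewrite // /Elat setU11.
rewrite /=.
have -> : \sum_(z in Elat G | Ele z y && (z != y)) mob_rec (Elat G) (@Ele t) n None z
        = \sum_(z in Elat G | Ele z y && (z != y)) mval G z.
  apply: eq_big => z; first by [].
  move=> /andP[zE /andP[zy zny]]; apply: IH => //.
  rewrite -ltnS; apply: leq_trans cy; apply: proper_card; rewrite properE; apply/andP; split.
    by apply/subsetP => w; rewrite !in_set => /andP[-> wz]; apply: Ele_trans wz zy.
  apply/subsetPn; exists y; first by rewrite in_set yE Ele_refl.
  by rewrite in_set yE /=; apply/negP => yz; move/negP: zny; apply; apply/eqP; exact: Ele_anti zy yz.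
have := down_sum yE; rewrite (bigD1 y) /=; last by rewrite yE Ele_refl.
have -> : (y == None) = false by apply/negbTE/eqP => E; apply: yN; rewrite E.
move=> /eqP; rewrite addr_eq0 => /eqP ->; rewrite ?opprK.
by congr (- _); apply: eq_bigl => z; rewrite andbA.
Qed.

Lemma mobius_eq G y : y \in Elat G -> mobius (Elat G) (@Ele t) None y = mval G y.
Proof.
move=> yE; apply: mob_rec_eq => //.
by apply: leq_trans (subset_leq_card _) (leqnSn _); apply/subsetP => z; rewrite inE => /andP[].
Qed.

Lemma mob_sum G (c : pred (option {set tvec t})) (psi : option {set tvec t} -> int) :
  \sum_(y in Elat G | c y) mobius (Elat G) (@Ele t) None y * psi y =
  \sum_(F : {set {set tvec t}} | F \subset G) (-1) ^+ #|F| * (if c (iotaF F) then psi (iotaF F) else 0).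
Proof.
rewrite (partition_big iotaF (fun y => y \in Elat G)) /=; last by move=> F; apply: iota_in.
rewrite big_mkcondr /=; apply: eq_bigr => y yE.
rewrite mobius_eq // /mval; case cy: (c y).
  by rewrite big_distrl; apply: eq_bigr => F /andP[_ /eqP ->]; rewrite cy.
by rewrite big1 // => F /andP[_ /eqP ->]; rewrite cy mulr0.
Qed.

End Mob.

Lemma arithKA x c k : (c <= x)%N -> (c <= k)%N -> (k <= x)%N ->
  ((2*x - k + 1) %/ 2 <= x - c)%N = ~~ (k < 2 * c)%N.
Proof.
move=> h1 h2 h3; rewrite -ltnS ltn_divLR // -leqNgt.
apply/idP/idP => /ssrnat.leP H; apply/ssrnat.leP; move/ssrnat.leP: h1; move/ssrnat.leP: h2; move/ssrnat.leP: h3; move: H;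
  rewrite -?plusE -?minusE -?multE; lia.
Qed.

Lemma disjU (T : finType) (K U1 U2 : {set T}) :
  [disjoint K & U1 :|: U2] = [disjoint K & U1] && [disjoint K & U2].
Proof. by rewrite -!setI_eq0 setIUr setU_eq0. Qed.

Lemma sum_drop (I : finType) (P1 P2 : pred I) (F : I -> int) :
  (forall i, P1 i -> ~~ P2 i -> F i = 0) ->
  \sum_(i | P1 i && P2 i) F i = \sum_(i | P1 i) F i.
Proof.
move=> H; rewrite [RHS](bigID P2) /= [X in _ = _ + X]big1 ?addr0 // => i /andP[]; exact: H.
Qed.

Section Gen.
Variables (t : nat) (Tp : {set tvec t}) (a : 'I_t) (k : nat).
Hypothesis Hk1 : (1 <= k)%N.
Hypothesis Hk2 : (k * 2 <= #|Tp|)%N.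
Hypothesis Hp : forall e, (#|Tplus Tp e| * 2 = #|Tp|)%N.
Hypothesis Hm : forall e, (#|Tminus Tp e| * 2 = #|Tp|)%N.
Variable R : pred {set tvec t}.
Variable Q : {set tvec t} -> int.
Implicit Types (F : {set {set tvec t}}) (U X G K : {set tvec t}).
Local Notation n := #|Tp|.
Local Notation h := (hpar Tp k).
Local Notation B := (Bpar Tp k).
Definition SS := [set K : {set tvec t} | [&& K \subset Tp, #|K| == k & R K]].
Hypothesis HQ : forall U : {set tvec t}, U \subset Tp -> Q U = #|[set K in SS | [disjoint K & U]]|%:R.
Local Notation P := (Pfam Tp a h).
Local Notation NM := (Nminus Tp a h).
Local Notation NP := (Nplus Tp a h).

Definition okfam (F : {set {set tvec t}}) :=
  forall G, G \in F -> (G \subset Tp) && (#|G| == h).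

Lemma okfamS (F1 F2 : {set {set tvec t}}) : okfam F2 -> F1 \subset F2 -> okfam F1.
Proof. by move=> H S G GF; apply: H; apply: (subsetP S). Qed.

Lemma okfamU (F1 F2 : {set {set tvec t}}) : okfam F1 -> okfam F2 -> okfam (F1 :|: F2).
Proof. by move=> H1 H2 G; rewrite inE => /orP[/H1|/H2]. Qed.

Lemma ok_subsets X : X \subset Tp -> okfam (subsets_of X h).
Proof.
move=> XT G; rewrite inE => /andP[GX ->]; rewrite andbT; exact: subset_trans GX XT.
Qed.

Lemma Tplus_sub e : Tplus Tp e \subset Tp.
Proof. by apply/subsetP => T; rewrite inE => /andP[]. Qed.
Lemma Tminus_sub e : Tminus Tp e \subset Tp.
Proof. by apply/subsetP => T; rewrite inE => /andP[]. Qed.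

Lemma okP : okfam P.
Proof.
move=> G /bigcupP[e _]; apply: ok_subsets; exact: Tplus_sub.
Qed.
Lemma okNM : okfam NM.
Proof. apply: okfamS (ok_subsets (Tminus_sub a)) _; exact: subsetDl. Qed.
Lemma okNP : okfam NP.
Proof. apply: okfamS (ok_subsets (Tplus_sub a)) _; exact: subsetDl. Qed.

Lemma Ufam_sub F : okfam F -> Ufam F \subset Tp.
Proof. by move=> H; apply/bigcupsP => G /H /andP[]. Qed.

Lemma h_pos : (0 < h)%N.
Proof.
rewrite /hpar divn_gt0 //.
move: Hk1 Hk2 => /ssrnat.leP H1 /ssrnat.leP H2; apply/ssrnat.leP.
move: H1 H2; rewrite -?plusE -?minusE -?multE; lia.
Qed.

Lemma Ufam0 F : okfam F -> (Ufam F == set0) = (F == set0).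
Proof.
move=> H; apply/idP/idP => [/eqP U0|/eqP ->]; last by rewrite /Ufam big_set0.
apply/negPn/negP => /set0Pn[G GF].
have /andP[_ /eqP cG] := H G GF.
have : G \subset Ufam F by apply: bigcup_sup.
rewrite U0 subset0 => /eqP G0; move: cG; rewrite G0 cards0 => h0.
by move: h_pos; rewrite -h0.
Qed.

Lemma famsize F : okfam F -> (#|Ufam F| <= n - k)%N -> (#|F| <= B)%N.
Proof.
move=> H le; apply: leq_trans (leq_bin2l h le).
rewrite -cards_draws; apply: subset_leq_card; apply/subsetP => G GF.
have /andP[_ cG] := H G GF; rewrite inE cG andbT; exact: bigcup_sup.
Qed.

Lemma Qzero U : U \subset Tp -> (n - k < #|U|)%N -> Q U = 0.
Proof.
move=> UT lt; rewrite HQ //; apply/eqP; rewrite pnatr_eq0 cards_eq0; apply/eqP/setP => K.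
rewrite !inE; apply/negP => /andP[/and3P[KT /eqP cK _] dKU].
have : (#|K| <= #|Tp :\: U|)%N by apply: subset_leq_card; rewrite subsetD KT.
rewrite cardsDS // cK => le; move: lt; rewrite ltnNge; apply/negP/negPn.
have := subset_leq_card UT; move: le Hk2 => /ssrnat.leP H1 /ssrnat.leP H2 /ssrnat.leP H3.
apply/ssrnat.leP; move: H1 H2 H3; rewrite -?plusE -?minusE -?multE; lia.
Qed.

Lemma LQ N (hN : okfam N) (dN : forall G, G \in N -> G \notin P)
  (G1 G2 : {set {set tvec t}}) :
  G1 \subset N -> G2 \subset P -> G1 != set0 ->
  ~~ [&& (#|G1| + #|G2| <= B)%N, (#|Ufam G1| <= n - k)%N,
         (#|G2| < B)%N & (#|Ufam G2| <= n - k)%N] ->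
  Q (Ufam (G1 :|: G2)) = 0.
Proof.
move=> S1 S2 ne H.
have ok12 : okfam (G1 :|: G2) := okfamU (okfamS hN S1) (okfamS okP S2).
apply: Qzero; first exact: Ufam_sub ok12.
rewrite ltnNge; apply: contra H => le.
have eU : Ufam (G1 :|: G2) = Ufam G1 :|: Ufam G2 by rewrite /Ufam bigcup_setU.
have l1 : (#|Ufam G1| <= n - k)%N.
  by apply: leq_trans le; rewrite eU subset_leq_card // subsetUl.
have l2 : (#|Ufam G2| <= n - k)%N.
  by apply: leq_trans le; rewrite eU subset_leq_card // subsetUr.
have dG : #|G1 :|: G2| = (#|G1| + #|G2|)%N.
  rewrite cardsU; suff -> : G1 :&: G2 = set0 by rewrite cards0 subn0.
  apply/setP => G; rewrite !inE; apply/negP => /andP[/(subsetP S1) GN /(subsetP S2) GP].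
  by move: (dN G GN); rewrite GP.
have fs := famsize ok12 le.
rewrite -dG fs l1 l2 /= andbT; apply: leq_trans fs; rewrite dG -addn1 addnC leq_add2r card_gt0 //.
Qed.

Lemma dNM G : G \in NM -> G \notin P.
Proof. by rewrite inE => /andP[]. Qed.
Lemma dNP G : G \in NP -> G \notin P.
Proof. by rewrite inE => /andP[]. Qed.

Definition fQ (G1 G2 : {set {set tvec t}}) := Q (Ufam (G1 :|: G2)).

Definition NE :=
  \sum_(G2 : {set {set tvec t}} | G2 \subset P) (-1) ^+ #|G2| *
   (\sum_(G1 : {set {set tvec t}} | (G1 \subset NM) && (G1 != set0)) (-1) ^+ #|G1| * fQ G1 G2
  - \sum_(G1 : {set {set tvec t}} | (G1 \subset NP) && (G1 != set0)) (-1) ^+ #|G1| * fQ G1 G2).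

Lemma inner_eq N (hN : okfam N) (dN : forall G, G \in N -> G \notin P)
  (G2 : {set {set tvec t}}) : G2 \subset P ->
  (#|G2| < B)%N && (#|Ufam G2| <= n - k)%N ->
  \sum_(G1 : {set {set tvec t}} | [&& G1 \subset N, (0 < #|G1|)%N, (#|G1| + #|G2| <= B)%N
                   & (#|Ufam G1| <= n - k)%N]) (-1) ^+ #|G1| * fQ G1 G2
  = \sum_(G1 : {set {set tvec t}} | (G1 \subset N) && (G1 != set0)) (-1) ^+ #|G1| * fQ G1 G2.
Proof.
move=> G2P c2.
rewrite -[RHS](@sum_drop _ _ (fun G1 : {set {set tvec t}} =>
            (#|G1| + #|G2| <= B)%N && (#|Ufam G1| <= n - k)%N)).
  by apply: eq_bigl => G1; rewrite card_gt0 !andbA.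
move=> G1 /andP[G1N ne] nc; rewrite /fQ (LQ hN dN G1N G2P ne) ?mulr0 //.
by apply: contra nc => /and4P[-> -> _ _].
Qed.

Lemma NE_vanish N (hN : okfam N) (dN : forall G, G \in N -> G \notin P)
  (G2 : {set {set tvec t}}) : G2 \subset P ->
  ~~ ((#|G2| < B)%N && (#|Ufam G2| <= n - k)%N) ->
  \sum_(G1 : {set {set tvec t}} | (G1 \subset N) && (G1 != set0)) (-1) ^+ #|G1| * fQ G1 G2 = 0.
Proof.
move=> G2P nc; rewrite big1 // => G1 /andP[G1N ne].
rewrite /fQ (LQ hN dN G1N G2P ne) ?mulr0 //.
by apply: contra nc => /and4P[_ _ -> ->].
Qed.

Lemma S1_NE : S1 Tp a k fQ = NE.
Proof.
rewrite /S1 /NE /=.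
rewrite -[RHS](@sum_drop _ _ (fun G2 : {set {set tvec t}} =>
            (#|G2| < B)%N && (#|Ufam G2| <= n - k)%N)); last first.
  move=> G2 G2P nc.
  by rewrite (NE_vanish okNM dNM G2P nc) (NE_vanish okNP dNP G2P nc) subrr mulr0.
rewrite (eq_bigl (fun G2 : {set {set tvec t}} =>
    (G2 \subset P) && ((#|G2| < B)%N && (#|Ufam G2| <= n - k)%N))) //.
apply: eq_bigr => G2 /andP[G2P c2].
by rewrite (inner_eq okNM dNM G2P c2) (inner_eq okNP dNP G2P c2).
Qed.

Lemma inner2 N (hN : okfam N) (dN : forall G, G \in N -> G \notin P)
  (G2 : {set {set tvec t}}) : G2 \subset P ->
  \sum_(G1 : {set {set tvec t}} | G1 \subset N) (-1) ^+ #|G1| *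
     (if (0 < osize (iotaF G1) <= n - k)%N then Q (oset (iotaF G1) :|: Ufam G2) else 0)
  = \sum_(G1 : {set {set tvec t}} | (G1 \subset N) && (G1 != set0)) (-1) ^+ #|G1| * fQ G1 G2.
Proof.
move=> G2P; rewrite big_mkcondr /=; apply: eq_bigr => G1 G1N.
rewrite /osize oset_iota card_gt0 (Ufam0 (okfamS hN G1N)).
case: eqP => [-> //|/eqP ne] /=; first by rewrite mulr0.
have E : Ufam G1 :|: Ufam G2 = Ufam (G1 :|: G2) by rewrite /Ufam bigcup_setU.
rewrite E /fQ; case: leqP => // lt; rewrite (LQ hN dN G1N G2P ne) ?mulr0 //.
by apply/negP => /and4P[_]; rewrite leqNgt lt.
Qed.

Lemma S2_NE : S2 Tp a k (fun G1 G2 => Q (G1 :|: G2)) = NE.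
Proof.
rewrite /S2 /NE /= mob_sum; apply: eq_bigr => G2 G2P.
rewrite /osize oset_iota; case: leqP => le.
  by rewrite !mob_sum (inner2 okNM dNM G2P) (inner2 okNP dNP G2P).
have nc : ~~ ((#|G2| < B)%N && (#|Ufam G2| <= n - k)%N) by apply/negP => /andP[_]; rewrite leqNgt le.
by rewrite (NE_vanish okNM dNM G2P nc) (NE_vanish okNP dNP G2P nc) subrr.
Qed.

Definition goodF (N : {set {set tvec t}}) K := [forall G in N, ~~ [disjoint K & G]].
Definition SP := [set K in SS | goodF P K].

Lemma NE_full : NE =
  \sum_(G2 : {set {set tvec t}} | G2 \subset P) (-1) ^+ #|G2| *
     \sum_(G1 : {set {set tvec t}} | G1 \subset NM) (-1) ^+ #|G1| * fQ G1 G2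
 - \sum_(G2 : {set {set tvec t}} | G2 \subset P) (-1) ^+ #|G2| *
     \sum_(G1 : {set {set tvec t}} | G1 \subset NP) (-1) ^+ #|G1| * fQ G1 G2.
Proof.
rewrite /NE -sumrB; apply: eq_bigr => G2 _; rewrite -mulrBr; congr (_ * _).
rewrite [X in _ = X - _](bigD1 set0) ?sub0set // [X in _ = _ - X](bigD1 set0) ?sub0set //=.
by rewrite opprD addrACA subrr add0r.
Qed.

Lemma Full_eq N : okfam N ->
  \sum_(G2 : {set {set tvec t}} | G2 \subset P) (-1) ^+ #|G2| *
     \sum_(G1 : {set {set tvec t}} | G1 \subset N) (-1) ^+ #|G1| * fQ G1 G2
  = #|[set K in SP | goodF N K]|%:R.
Proof.
move=> hN.
have E : forall G1 G2 : {set {set tvec t}}, G1 \subset N -> G2 \subset P ->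
   fQ G1 G2 = #|[set K in [set K in SS | [disjoint K & Ufam G1]] | [disjoint K & Ufam G2]]|%:R.
  move=> G1 G2 G1N G2P; rewrite /fQ HQ; last first.
    exact: Ufam_sub (okfamU (okfamS hN G1N) (okfamS okP G2P)).
  congr (_ %:R); apply: eq_card => K; rewrite !inE /Ufam bigcup_setU disjU andbA //.
under eq_bigr => G2 G2P do under eq_bigr => G1 G1N do rewrite (E G1 G2 G1N G2P).
under eq_bigr => G2 _ do rewrite big_distrr /=.
rewrite exchange_big /=.
under eq_bigr => G1 _ do under eq_bigr => G2 _ do rewrite mulrCA.
under eq_bigr => G1 _ do rewrite -big_distrr /= (IE _ P).
rewrite -(IE SP N); apply: eq_bigr => G1 _; congr (_ * _ %:R).
by apply: eq_card => K; rewrite !inE andbAC.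
Qed.

Lemma NE_cnt : NE = #|[set K in SP | goodF NM K]|%:R - #|[set K in SP | goodF NP K]|%:R.
Proof. by rewrite NE_full (Full_eq okNM) (Full_eq okNP). Qed.

Lemma KA (p : pred (tvec t)) K : K \in SS ->
  (#|[set T in Tp | p T]| * 2 = n)%N ->
  goodF (subsets_of [set T in Tp | p T] h) K = (k < 2 * #|[set T in K | p T]|)%N.
Proof.
rewrite inE => /and3P[KT /eqP cK _] cX.
set X := [set T in Tp | p T].
have eXK : X :&: K = [set T in K | p T].
  apply/setP => T; rewrite !inE; apply/andP/andP => [[/andP[_ ->] ->]//|[TK ->]].
  by rewrite (subsetP KT _ TK).
have cD : #|X :\: K| = (#|X| - #|[set T in K | p T]|)%N by rewrite cardsD eXK.
have -> : goodF (subsets_of X h) K = ~~ (h <= #|X :\: K|)%N.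
  apply/forall_inP/idP => [H|H G].
    apply/negP => le.
    have : (0 < #|[set A : {set tvec t} | A \subset X :\: K & #|A| == h]|)%N.
      by rewrite cards_draws bin_gt0.
    rewrite card_gt0 => /set0Pn[A]; rewrite inE => /andP[].
    rewrite subsetD => /andP[AX dAK] cA.
    by move: (H A); rewrite inE AX cA disjoint_sym dAK => /(_ isT).
  rewrite inE => /andP[GX /eqP cG]; apply/negP => dKG; move/negP: H; apply.
  by rewrite -cG; apply: subset_leq_card; rewrite subsetD GX disjoint_sym.
have c1 : (#|[set T in K | p T]| <= #|X|)%N.
  by rewrite -eXK subset_leq_card // subsetIl.
have c2 : (#|[set T in K | p T]| <= k)%N.
  by rewrite -cK subset_leq_card //; apply/subsetP => T; rewrite inE => /andP[].
have c3 : (k <= #|X|)%N by rewrite -(leq_pmul2r (isT : 0 < 2)%N) cX.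
by rewrite cD /hpar -cX mulnC arithKA ?negbK.
Qed.

Lemma goodP_iff K : K \in SS ->
  goodF P K = [forall e, (e != a) ==> (k < 2 * #|[set T in K | T e]|)%N].
Proof.
move=> KS; apply/forall_inP/forall_inP => [H e ea|H G /bigcupP[e ea GS]].
  by rewrite -(KA KS (Hp e)); apply/forall_inP => G GS; apply: H; apply/bigcupP; exists e.
by move: (H e ea); rewrite -(KA KS (Hp e)) => /forall_inP; apply.
Qed.

Lemma goodN_iff (X : {set tvec t}) (N : {set {set tvec t}}) K :
  N = subsets_of X h :\: P -> goodF P K ->
  goodF N K = goodF (subsets_of X h) K.
Proof.
move=> -> gP; apply/forall_inP/forall_inP => [H G GS|H G]; last by rewrite inE => /andP[_ /H].
case GP: (G \in P); first by move/forall_inP: gP; apply.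
by apply: H; rewrite inE GP.
Qed.

Definition cnt_c (f : 'I_t -> tvec t -> bool) :=
  #|[set K : {set tvec t} | [&& K \subset Tp, #|K| == k, R K &
        [forall e, (#|K| < 2 * #|[set T in K | f e T]|)%N]]]|.

Lemma forall_split (f : 'I_t -> tvec t -> bool) (K : {set tvec t}) (b : tvec t -> bool) :
  #|K| = k -> (forall e T, e != a -> f e T = T e) -> (forall T, f a T = b T) ->
  [forall e, (#|K| < 2 * #|[set T in K | f e T]|)%N] =
  [forall e, (e != a) ==> (k < 2 * #|[set T in K | T e]|)%N] &&
  (k < 2 * #|[set T in K | b T]|)%N.
Proof.
move=> cK fe fa; rewrite cK.
have E1 e : e != a -> [set T in K | f e T] = [set T in K | T e].
  by move=> ea; apply/setP => T; rewrite !inE fe.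
have E2 : [set T in K | f a T] = [set T in K | b T].
  by apply/setP => T; rewrite !inE fa.
apply/forallP/andP => [H|[/forallP H1 H2] e].
  split; last by rewrite -E2.
  by apply/forallP => e; apply/implyP => ea; rewrite -E1.
case: (eqVneq e a) => [->|ea]; first by rewrite E2.
by rewrite E1 //; move/implyP: (H1 e); apply.
Qed.

Lemma fin_case (N : {set {set tvec t}}) (X : {set tvec t}) (f : 'I_t -> tvec t -> bool)
  (b : tvec t -> bool) :
  X = [set T in Tp | b T] -> (#|X| * 2 = n)%N ->
  N = subsets_of X h :\: P ->
  (forall e T, e != a -> f e T = T e) -> (forall T, f a T = b T) ->
  #|[set K in SP | goodF N K]| = cnt_c f.
Proof.
move=> EX cX EN fe fa; apply: eq_card => K; rewrite !inE.
case/boolP: [&& K \subset Tp, #|K| == k & R K] => KS'; last first.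
  by apply/esym/negbTE; apply: contra KS' => /and4P[-> -> -> _].
have KS : K \in SS by rewrite inE.
move: (KS') => /and3P[-> /eqP cK ->]; rewrite (forall_split cK fe fa) cK eqxx /=.
rewrite -(goodP_iff KS).
case gP: (goodF P K) => //=.
rewrite (goodN_iff EN gP).
move: cX; rewrite EX => cX; exact: (KA KS cX).
Qed.

Lemma NE_final :
  NE = (cnt_c (fun e T => flip_at a T e))%:R - (cnt_c (fun e T => T e))%:R.
Proof.
rewrite NE_cnt (@fin_case NM (Tminus Tp a) (fun e T => flip_at a T e) (fun T => ~~ T a)) //; last first.
- by move=> T; rewrite ffunE eqxx.
- by move=> e T ea; rewrite ffunE (negbTE ea).
by rewrite (@fin_case NP (Tplus Tp a) (fun e T => T e) (fun T => T a)).
Qed.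

Theorem gen_S1 : S1 Tp a k fQ =
  (cnt_c (fun e T => flip_at a T e))%:R - (cnt_c (fun e T => T e))%:R.
Proof. by rewrite S1_NE NE_final. Qed.

Theorem gen_S2 : S2 Tp a k (fun G1 G2 => Q (G1 :|: G2)) =
  (cnt_c (fun e T => flip_at a T e))%:R - (cnt_c (fun e T => T e))%:R.
Proof. by rewrite S2_NE NE_final. Qed.

End Gen.

Close Scope ring_scope.

Section Fin.
Variable t : nat.
Implicit Types (Tp K U : {set tvec t}).

Lemma flipK (a : 'I_t) : involutive (flip_at a).
Proof. by move=> T; apply/ffunP => e; rewrite !ffunE; case: eqP => // ->; rewrite negbK. Qed.

Lemma tneg_flip (a : 'I_t) T : tneg (flip_at a T) = flip_at a (tneg T).
Proof. by apply/ffunP => e; rewrite !ffunE; case: eqP. Qed.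

Definition phi (a : 'I_t) K := [set flip_at a T | T in K].

Lemma phiE a K : phi a K = flip_at a @^-1: K.
Proof. by apply: can2_imset_pre; apply: flipK. Qed.

Lemma phiK a : involutive (phi a).
Proof.
move=> K; apply/setP => T; rewrite !phiE !inE flipK //.
Qed.

Lemma phi_sub a A B : (phi a A \subset phi a B) = (A \subset B).
Proof.
apply/idP/idP => H; last by apply: imsetS.
by rewrite -(phiK a A) -(phiK a B); apply: imsetS.
Qed.

Lemma comm_count Tp k (R : pred {set tvec t}) :
  #|[set K : {set tvec t} | [&& is_committee Tp K, #|K| == k & R K]]| =
  cnt_c Tp k R (fun e T => T e).
Proof.
apply: eq_card => K; rewrite !inE /is_committee.
by case: (K \subset Tp); case: [forall e, _]; case: (#|K| == k); case: (R K).
Qed.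

Lemma comm_count_r Tp k (R : pred {set tvec t}) (a : 'I_t) :
  (forall K, R (phi a K) = R K) ->
  #|[set K : {set tvec t} | [&& is_committee (reorient_topes a Tp) K, #|K| == k & R K]]| =
  cnt_c Tp k R (fun e T => flip_at a T e).
Proof.
move=> HR.
have inj : injective (phi a) by apply: can_inj (phiK a).
rewrite -(card_preimset _ inj); apply: eq_card => K; rewrite !inE /is_committee.
rewrite HR -/(phi a Tp) phi_sub card_imset; last by apply: can_inj (flipK a).
case: (K \subset Tp); case: (#|K| == k); case: (R K); rewrite /= ?andbF //.
rewrite andbT; apply/forallP/forallP => H e; move: (H e).
  suff -> : #|[set T in phi a K | T e]| = #|[set T in K | flip_at a T e]| by [].
  rewrite phiE -(card_preimset _ (can_inj (flipK a))); apply: eq_card => T.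
  by rewrite !inE flipK.
suff -> : #|[set T in phi a K | T e]| = #|[set T in K | flip_at a T e]| by [].
rewrite phiE -(card_preimset _ (can_inj (flipK a))); apply: eq_card => T.
by rewrite !inE flipK.
Qed.

Lemma af_phi a K : af (phi a K) = af K.
Proof.
rewrite /af; apply/forallP/forallP => H T.
  move: (H (flip_at a T)); rewrite !phiE !inE flipK tneg_flip flipK //.
move: (H (flip_at a T)); rewrite !phiE !inE tneg_flip //.
Qed.

Lemma tneg_top (L : {set covec t}) T : is_OM L -> T \in topes L -> tneg T \in topes L.
Proof.
case=> _ Hneg _ _; rewrite !inE => /Hneg.
by congr (_ \in L); apply/ffunP => e; rewrite !ffunE.
Qed.

Lemma halves Tp : (forall T, T \in Tp -> tneg T \in Tp) -> forall e,
  (#|Tplus Tp e| * 2 = #|Tp|)%N /\ (#|Tminus Tp e| * 2 = #|Tp|)%N.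
Proof.
move=> cl e.
have cl' T : (tneg T \in Tp) = (T \in Tp).
  by apply/idP/idP => [/cl|/cl //]; rewrite tnegK.
have E : (@tneg t) @: Tplus Tp e = Tminus Tp e.
  rewrite (can2_imset_pre _ (@tnegK t) (@tnegK t)); apply/setP => T.
  by rewrite !inE cl' ffunE.
have cE : #|Tminus Tp e| = #|Tplus Tp e| by rewrite -E card_imset //; apply: can_inj (@tnegK t).
have S : (#|Tplus Tp e| + #|Tminus Tp e| = #|Tp|)%N.
  rewrite -(cardsID [set T : tvec t | T e] Tp); congr (_ + _)%N; apply: eq_card => T; rewrite !inE //.
  by rewrite andbC.
by rewrite -S cE muln2 addnn.
Qed.

Lemma tneg_neq_t : (1 <= t)%N -> forall T : tvec t, tneg T != T.
Proof.
move=> Ht T; apply/eqP => E; have := congr1 (fun f : tvec t => f (Ordinal Ht)) E.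
by rewrite ffunE; case: (T _).
Qed.

Open Scope ring_scope.
Lemma HQbin Tp k U : U \subset Tp ->
  Qbin Tp k U = (#|[set K in SS Tp k predT | [disjoint K & U]]|%:R : int).
Proof.
move=> UT; rewrite /Qbin -natz; congr (_ %:R).
rewrite -cardsDS // -cards_draws; apply: eq_card => K; rewrite !inE subsetD.
by case: (K \subset Tp); case: (#|K| == k); case: [disjoint K & U].
Qed.

Lemma HQring Tp k U : (1 <= t)%N -> (forall T, T \in Tp -> tneg T \in Tp) -> U \subset Tp ->
  Qring Tp k U = (#|[set K in SS Tp k (@af t) | [disjoint K & U]]|%:R : int).
Proof.
move=> Ht cl UT; rewrite /Qring -natz; congr (_ %:R).
have tn := tneg_neq_t Ht.
set UU := U :|: [set tneg T | T in U].
pose A := UU :\: U; pose W := Tp :\: UU.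
have UUT : UU \subset Tp.
  rewrite subUset UT /=; apply/subsetP => T /imsetP[T' T'U ->]; apply: cl.
  exact: (subsetP UT).
have -> : #|[set K in SS Tp k (@af t) | [disjoint K & U]]| = cc (A :|: W) k (@af t).
  have -> : A :|: W = Tp :\: U.
    apply/setP => T; rewrite !inE; case: (T \in U) => //=; rewrite ?andbF //.
    case TU: (T \in [set tneg T0 | T0 in U]) => //=.
    by rewrite (subsetP UUT) // /UU inE TU orbT.
  apply: eq_card => K; rewrite !inE subsetD.
  by case: (K \subset Tp); case: (#|K| == k); case: (af K); case: [disjoint K & U].
have nA : forall x, x \in A -> tneg x \notin A :|: W.
  move=> x; rewrite !inE => /andP[xU /orP[xU'|/imsetP[y yU ->]]]; first by rewrite xU' in xU.
  by rewrite tnegK yU.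
have dAW : [disjoint A & W].
  rewrite -setI_eq0; apply/eqP/setP => T; rewrite !inE.
  by case: (T \in U); case: (T \in [set tneg T0 | T0 in U]); rewrite ?andbF.
have cW : tclosed W.
  move=> x; rewrite !inE => /andP[xUU xT]; rewrite (cl _ xT) andbT.
  apply: contra xUU => /orP[nU|/imsetP[y yU E]].
    by apply/orP; right; apply/imsetP; exists (tneg x) => //; rewrite tnegK.
  by rewrite -(tnegK x) E tnegK yU.
rewrite (ccA tn (erefl #|A|) dAW nA).
apply: eq_bigr => j _; rewrite (@ccW t tn #|W| W cW (leq_pmulr _ (isT : (0 < 2)%N))) mulnA.
by rewrite /A /W !cardsDS // subsetUl.
Qed.

End Fin.

Open Scope ring_scope.
Unset Implicit Arguments.

Theorem mainTheorem7 (t : nat) (L : {set covec t}) (a : 'I_t) (k : nat) :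
  (1 <= t)%N -> is_OM L -> simple_OM L ->
  (1 <= k)%N -> (k * 2 <= #|topes L|)%N ->
  let Tp := topes L in
  let Tr := reorient_topes a Tp in
  (* (i) *)
  (S1 Tp a k (fun G1 G2 => Qbin Tp k (Ufam (G1 :|: G2)))
     = (kappa k Tr)%:Z - (kappa k Tp)%:Z /\
   S2 Tp a k (fun G1 G2 => Qbin Tp k (G1 :|: G2))
     = (kappa k Tr)%:Z - (kappa k Tp)%:Z) /\
  (* (ii) *)
  (S1 Tp a k (fun G1 G2 => Qring Tp k (Ufam (G1 :|: G2)))
     = (kappa_ring k Tr)%:Z - (kappa_ring k Tp)%:Z /\
   S2 Tp a k (fun G1 G2 => Qring Tp k (G1 :|: G2))
     = (kappa_ring k Tr)%:Z - (kappa_ring k Tp)%:Z).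
Proof.
move=> Ht OM _ Hk1 Hk2 Tp Tr.
have cl : forall T, T \in Tp -> tneg T \in Tp by move=> T; apply: tneg_top.
have Hp e := (halves cl e).1.
have Hm e := (halves cl e).2.
have kap : kappa k Tp = cnt_c Tp k predT (fun e T => T e).
  by rewrite -comm_count; apply: eq_card => K; rewrite !inE andbT.
have kapr : kappa k Tr = cnt_c Tp k predT (fun e T => flip_at a T e).
  by rewrite -comm_count_r //; apply: eq_card => K; rewrite !inE andbT.
have kring : kappa_ring k Tp = cnt_c Tp k (@af t) (fun e T => T e).
  by rewrite -comm_count.
have kringr : kappa_ring k Tr = cnt_c Tp k (@af t) (fun e T => flip_at a T e).
  by rewrite -comm_count_r //; apply: af_phi.
have HQb := @HQbin t Tp k.
have HQr := fun U => @HQring t Tp k U Ht cl.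
split; split.
- by rewrite kapr kap -!natz; exact: (gen_S1 a Hk2 Hp Hm HQb).
- by rewrite kapr kap -!natz; exact: (gen_S2 a Hk1 Hk2 Hp Hm HQb).
- by rewrite kringr kring -!natz; exact: (gen_S1 a Hk2 Hp Hm HQr).
- by rewrite kringr kring -!natz; exact: (gen_S2 a Hk1 Hk2 Hp Hm HQr).
Qed.
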